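(* Let $B$ be a simple Bratteli diagram of rank $d\ge 2$ all of whose incidence matrices have strictly positive entries. Then both $\mathcal P_B$ and its complement $\mathcal O_B\setminus\mathcal P_B$ are dense in $\mathcal O_B$.
   Context: A Bratteli diagram $B=(V^*,E)$ consists of a vertex set $V^*=\bigsqcup_{n\ge 0}V_n$ and edge set $E=\bigsqcup_{n\ge1}E_n$, where $V_0=\{v_0\}$, all $V_n,E_n$ are finite, and there are maps $r,s:E\to V^*$ with $r(E_n)=V_n$, $s(E_n)=V_{n-1}$, $s^{-1}(v)\neq\emptyset$ for all $v$ and $r^{-1}(v)\neq\emptyset$ for $v\neq v_0$. The incidence matrix $F_n=(f^{(n)}_{v,w})_{v\in V_{n+1},w\in V_n}$ has $f^{(n)}_{v,w}$ = number of edges in $E_{n+1}$ from $w$ to $v$. $X_B$ is the space of infinite paths from $v_0$ with the cylinder topology. Standing assumptions: $B$ is aperiodic (every tail-equivalence class of $X_B$ is infinite), $X_B$ is a Cantor set, and $B$ is not a disjoint union of two subdiagrams sharing only $v_0$. $B$ is simple if for every $n$ there is $m>n$ such that every vertex of $V_n$ is joined by a path to every vertex of $V_m$; $B$ has rank $d$ if $\sup_n|V_n|<\infty$ and $d$ is the smallest integer with $|V_n|=d$ infinitely often. An ordering $\omega$ is a linear order on each $r^{-1}(v)$, $v\neq v_0$; $\mathcal O_B=\prod_{v\in V^*\setminus V_0}P_v$ where $P_v$ is the (discrete) set of linear orders on $r^{-1}(v)$, with the product topology. Maximal/minimal paths and Vershik maps are defined as usual: a Vershik map is a homeomorphism $\varphi$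 of $X_B$ mapping the set of maximal infinite paths onto the set of minimal ones, and sending each non-maximal $x$ to the path obtained by replacing the first non-maximal edge $x_k$ by its successor in $r^{-1}(r(x_k))$ and $(x_1,\dots,x_{k-1})$ by the minimal path to the source of that successor. $\omega$ is perfect if a Vershik map exists; $\mathcal P_B$ is the set of perfect orderings. *)

(* Defs.v *)
From Stdlib Require Import Arith List.
Import ListNotations.

(* A Bratteli diagram, up to isomorphism, given by level sizes and incidence
   matrices.  V_n = {0, ..., nv n - 1}; V_0 = {v_0} = {0}.
   inc n v w = f^{(n)}_{v,w} = number of edges of E_{n+1} from w in V_n to
   v in V_{n+1}.  The edges of E_{n+1} from w to v are labelled 0..inc n v w - 1. *)
Record Bratteli := {
  nv : nat -> nat;
  inc : nat -> nat -> nat -> nat;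
  nv_0 : nv 0 = 1;
  src_ne : forall n w, w < nv n -> exists v, v < nv (S n) /\ 0 < inc n v w;
  rng_ne : forall n v, v < nv (S n) -> exists w, w < nv n /\ 0 < inc n v w
}.

(* r^{-1}(v) for v in V_{n+1}: edges identified by (source w, label k). *)
Definition in_r (B : Bratteli) (n v : nat) (e : nat * nat) : Prop :=
  fst e < nv B n /\ snd e < inc B n v (fst e).

Definition positive_incidence (B : Bratteli) : Prop :=
  forall n v w, v < nv B (S n) -> w < nv B n -> 0 < inc B n v w.

Fixpoint reach (B : Bratteli) (n v j u : nat) : Prop :=
  match j with
  | 0 => u = v
  | S j' => exists w, w < nv B (n + j') /\ reach B n v j' w /\ 0 < inc B (n + j') u w
  end.

Definition simple (B : Bratteli) : Prop :=
  forall n, exists m, n < m /\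
    forall v u, v < nv B n -> u < nv B m -> reach B n v (m - n) u.

Definition infinitely_often (P : nat -> Prop) : Prop :=
  forall N, exists n, N <= n /\ P n.

Definition has_rank (B : Bratteli) (d : nat) : Prop :=
  (exists M, forall n, nv B n <= M) /\
  infinitely_often (fun n => nv B n = d) /\
  (forall d', d' < d -> ~ infinitely_often (fun n => nv B n = d')).

(* omega n v is a (strict) order relation on r^{-1}(v), v in V_{n+1}. *)
Definition order_data := nat -> nat -> nat * nat -> nat * nat -> Prop.

Definition strict_linear (D : nat * nat -> Prop) (R : nat * nat -> nat * nat -> Prop) : Prop :=
  (forall a, D a -> ~ R a a) /\
  (forall a b c, D a -> D b -> D c -> R a b -> R b c -> R a c) /\
  (forall a b, D a -> D b -> a = b \/ R a b \/ R b a).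

Definition is_ordering (B : Bratteli) (om : order_data) : Prop :=
  forall n v, v < nv B (S n) -> strict_linear (in_r B n v) (om n v).

(* x i = (r(x_{i+1}), label of x_{i+1}); the source of x_{i+1} is r(x_i)
   (or v_0 = 0 for i = 0). *)
Definition path := nat -> nat * nat.

Definition src (x : path) (i : nat) : nat :=
  match i with 0 => 0 | S j => fst (x j) end.

Definition is_path (B : Bratteli) (x : path) : Prop :=
  forall i, fst (x i) < nv B (S i) /\ snd (x i) < inc B i (fst (x i)) (src x i).

(* the (i+1)-th edge of x as an element of r^{-1}(fst (x i)) *)
Definition edge_at (x : path) (i : nat) : nat * nat := (src x i, snd (x i)).

Definition is_max (B : Bratteli) (om : order_data) (n v : nat) (e : nat * nat) : Prop :=
  forall e', in_r B n v e' -> ~ om n v e e'.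
Definition is_min (B : Bratteli) (om : order_data) (n v : nat) (e : nat * nat) : Prop :=
  forall e', in_r B n v e' -> ~ om n v e' e.
Definition is_succ (B : Bratteli) (om : order_data) (n v : nat) (e e' : nat * nat) : Prop :=
  in_r B n v e' /\ om n v e e' /\
  forall e'', in_r B n v e'' -> om n v e e'' -> ~ om n v e'' e'.

Definition max_path (B : Bratteli) (om : order_data) (x : path) : Prop :=
  forall i, is_max B om i (fst (x i)) (edge_at x i).
Definition min_path (B : Bratteli) (om : order_data) (x : path) : Prop :=
  forall i, is_min B om i (fst (x i)) (edge_at x i).

Definition agree_upto (x y : path) (m : nat) : Prop := forall i, i < m -> x i = y i.

Definition continuous_on (B : Bratteli) (phi : path -> path) : Prop :=
  forall x, is_path B x -> forall n, exists m, forall y, is_path B y ->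
    agree_upto x y m -> agree_upto (phi x) (phi y) n.

Definition homeomorphism (B : Bratteli) (phi : path -> path) : Prop :=
  (forall x, is_path B x -> is_path B (phi x)) /\ continuous_on B phi /\
  exists psi, (forall x, is_path B x -> is_path B (psi x)) /\ continuous_on B psi /\
    (forall x, is_path B x -> forall i, psi (phi x) i = x i) /\
    (forall x, is_path B x -> forall i, phi (psi x) i = x i).

Definition vershik_map (B : Bratteli) (om : order_data) (phi : path -> path) : Prop :=
  homeomorphism B phi /\
  (forall x, is_path B x -> max_path B om x -> min_path B om (phi x)) /\
  (forall y, is_path B y -> min_path B om y ->
     exists x, is_path B x /\ max_path B om x /\ forall i, phi x i = y i) /\
  (forall x, is_path B x -> forall k,
     ~ is_max B om k (fst (x k)) (edge_at x k) ->
     (forall j, j < k -> is_max B om j (fst (x j)) (edge_at x j)) ->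
     (forall j, k < j -> phi x j = x j) /\
     fst (phi x k) = fst (x k) /\
     is_succ B om k (fst (x k)) (edge_at x k) (edge_at (phi x) k) /\
     (forall j, j < k -> is_min B om j (fst (phi x j)) (edge_at (phi x) j))).

Definition perfect (B : Bratteli) (om : order_data) : Prop :=
  exists phi, vershik_map B om phi.

(* density in O_B (product of discrete spaces): every basic open set,
   i.e. prescribing the orders at finitely many vertices, meets P. *)
Definition agree_at (B : Bratteli) (om om' : order_data) (n v : nat) : Prop :=
  forall e e', in_r B n v e -> in_r B n v e' -> (om n v e e' <-> om' n v e e').

Definition dense_in_orderings (B : Bratteli) (P : order_data -> Prop) : Prop :=
  forall om, is_ordering B om -> forall L : list (nat * nat),
    exists om', is_ordering B om' /\ P om' /\
      forall n v, In (n, v) L -> v < nv B (S n) -> agree_at B om om' n v.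

(* Main.v *)
Require Import Defs.
From Stdlib Require Import Arith List Lia Classical ClassicalEpsilon.
Import ListNotations.

Lemma list_min {T : Type} (R : T -> T -> Prop) (P : T -> Prop)
  (irr : forall a, P a -> ~ R a a)
  (tr : forall a b c, P a -> P b -> P c -> R a b -> R b c -> R a c) :
  forall l, (exists a, P a /\ In a l) ->
  exists m, P m /\ forall b, P b -> In b l -> ~ R b m.
Proof.
  induction l as [|x l IH]; intros [a [Pa Ia]].
  - destruct Ia.
  - destruct (classic (exists a, P a /\ In a l)) as [H|H].
    + destruct (IH H) as [m [Pm Hm]].
      destruct (classic (P x /\ R x m)) as [[Px Rxm]|Hx].
      * exists x. split; [exact Px|]. intros b Pb [Eb|Ib].
        -- subst b. apply irr; exact Pb.
        -- intro Rbx. apply (Hm b Pb Ib). exact (tr b x m Pb Px Pm Rbx Rxm).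
      * exists m. split; [exact Pm|]. intros b Pb [Eb|Ib].
        -- subst b. intro Rbm. apply Hx. split; assumption.
        -- apply Hm; assumption.
    + destruct Ia as [Ea|Ia]; [subst a| exfalso; apply H; eauto].
      exists x. split; [exact Pa|]. intros b Pb [Eb|Ib].
      * subst b. apply irr; exact Pb.
      * exfalso; apply H; eauto.
Qed.

Definition enum_r (B : Bratteli) (n v : nat) : list (nat * nat) :=
  flat_map (fun w => map (fun k => (w, k)) (seq 0 (inc B n v w))) (seq 0 (nv B n)).

Lemma enum_r_in B n v e : in_r B n v e -> In e (enum_r B n v).
Proof.
  destruct e as [w k]. unfold in_r, enum_r. simpl. intros [Hw Hk].
  apply in_flat_map. exists w. split.
  - apply in_seq. lia.
  - apply in_map_iff. exists k. split; [reflexivity|]. apply in_seq. lia.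
Qed.

Lemma min_exists B n v (R : nat*nat -> nat*nat -> Prop) (P : nat*nat -> Prop) :
  strict_linear (in_r B n v) R -> (forall a, P a -> in_r B n v a) -> (exists a, P a) ->
  exists m, P m /\ forall b, P b -> ~ R b m.
Proof.
  intros [Hirr [Htr _]] HP [a Pa].
  destruct (list_min R P (fun a Pa => Hirr a (HP a Pa))
     (fun a b c Pa Pb Pc => Htr a b c (HP a Pa) (HP b Pb) (HP c Pc)) (enum_r B n v)) as [m [Pm Hm]].
  - exists a. split; [exact Pa| apply enum_r_in; auto].
  - exists m. split; [exact Pm|]. intros b Pb. apply Hm; [exact Pb| apply enum_r_in; auto].
Qed.

Definition opo (om : order_data) : order_data := fun n v a b => om n v b a.

Lemma op_ordering B om : is_ordering B om -> is_ordering B (opo om).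
Proof.
  intros H n v Hv. destruct (H n v Hv) as [Hi [Ht Hto]]. unfold opo. split; [|split].
  - intros a Ha. apply Hi; auto.
  - intros a b c Ha Hb Hc H1 H2. exact (Ht c b a Hc Hb Ha H2 H1).
  - intros a b Ha Hb. destruct (Hto a b Ha Hb) as [E|[E|E]]; auto.
Qed.

Lemma min_unique B om n v a b : is_ordering B om -> v < nv B (S n) ->
  in_r B n v a -> in_r B n v b -> is_min B om n v a -> is_min B om n v b -> a = b.
Proof.
  intros H Hv Ha Hb Ma Mb. destruct (H n v Hv) as [_ [_ Hto]].
  destruct (Hto a b Ha Hb) as [E|[E|E]]; auto.
  - exfalso; exact (Mb a Ha E).
  - exfalso; exact (Ma b Hb E).
Qed.

Lemma succ_unique B om n v e a b : is_ordering B om -> v < nv B (S n) ->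
  is_succ B om n v e a -> is_succ B om n v e b -> a = b.
Proof.
  intros H Hv [Ia [Ra Ha]] [Ib [Rb Hb]]. destruct (H n v Hv) as [_ [_ Hto]].
  destruct (Hto a b Ia Ib) as [E|[E|E]]; auto.
  - exfalso; exact (Hb a Ia Ra E).
  - exfalso; exact (Ha b Ib Rb E).
Qed.

Lemma exists_min B om n v : is_ordering B om -> v < nv B (S n) ->
  exists e, in_r B n v e /\ is_min B om n v e.
Proof.
  intros H Hv. destruct (rng_ne B n v Hv) as [w [Hw Hi]].
  assert (Ex : exists a, in_r B n v a) by (exists (w,0); unfold in_r; simpl; lia).
  destruct (min_exists B n v (om n v) (in_r B n v) (H n v Hv) (fun a Ha => Ha) Ex) as [m [Pm Hm]].
  exists m. split; [exact Pm|]. intros e' He'. apply Hm; auto.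
Qed.

Lemma exists_succ B om n v e : is_ordering B om -> v < nv B (S n) -> in_r B n v e ->
  ~ is_max B om n v e -> exists e', is_succ B om n v e e'.
Proof.
  intros H Hv He Hm.
  assert (Hex : exists e', in_r B n v e' /\ om n v e e').
  { apply NNPP. intro C. apply Hm. intros e' He' R. apply C. eauto. }
  destruct (min_exists B n v (om n v) (fun b => in_r B n v b /\ om n v e b) (H n v Hv)
     (fun a Ha => proj1 Ha) Hex) as [m [[Im Rm] Hm']].
  exists m. split; [exact Im|split; [exact Rm|]].
  intros e'' I'' R''. apply Hm'. split; assumption.
Qed.

Lemma succ_op B om n v e e' : in_r B n v e -> is_succ B om n v e e' -> is_succ B (opo om) n v e' e.
Proof.
  intros He [I' [R H]]. unfold is_succ, opo. split; [exact He|split; [exact R|]].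
  intros e'' I'' R1 R2. exact (H e'' I'' R2 R1).
Qed.

Lemma succ_not_min B om n v e e' : in_r B n v e -> is_succ B om n v e e' -> ~ is_min B om n v e'.
Proof. intros He [_ [R _]] Hm. exact (Hm e He R). Qed.

Definition valid (B : Bratteli) (x : path) (j : nat) : Prop :=
  fst (x j) < nv B (S j) /\ snd (x j) < inc B j (fst (x j)) (src x j) /\ src x j < nv B j.

Lemma path_valid B x : is_path B x -> forall j, valid B x j.
Proof.
  intros H j. destruct (H j) as [H1 H2]. split; [exact H1|split; [exact H2|]].
  destruct j as [|j]; simpl.
  - rewrite (nv_0 B). lia.
  - exact (proj1 (H j)).
Qed.

Lemma valid_path B x : (forall j, valid B x j) -> is_path B x.
Proof. intros H j. destruct (H j) as [H1 [H2 _]]. split; assumption. Qed.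

Lemma valid_in_r B x j : valid B x j -> in_r B j (fst (x j)) (edge_at x j).
Proof. intros [_ [H2 H3]]. unfold in_r, edge_at. simpl. split; assumption. Qed.

Definition minseg B om (x : path) k : Prop :=
  forall j, j < k -> valid B x j /\ is_min B om j (fst (x j)) (edge_at x j).

Definition upd (s : path) k p : path := fun j => if Nat.eqb j k then p else s j.

Lemma upd_eq s k p : upd s k p k = p.
Proof. unfold upd. rewrite Nat.eqb_refl. reflexivity. Qed.
Lemma upd_neq s k p j : j <> k -> upd s k p j = s j.
Proof. intros H. unfold upd. destruct (Nat.eqb_spec j k); [contradiction|reflexivity]. Qed.

Lemma src_upd_le s k p j : j <= k -> src (upd s k p) j = src s j.
Proof.
  intros H. destruct j as [|j]; simpl; [reflexivity|]. rewrite upd_neq; [reflexivity|lia].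
Qed.

Lemma chain_exists B om : is_ordering B om -> forall k u, u < nv B k ->
  exists s, minseg B om s k /\ src s k = u.
Proof.
  intros H. induction k as [|k IH]; intros u Hu.
  - exists (fun _ => (0,0)). split.
    + intros j Hj; lia.
    + simpl. rewrite (nv_0 B) in Hu. lia.
  - destruct (exists_min B om k u H Hu) as [[w l] [Ie Me]].
    destruct Ie as [Hw Hl]. simpl in Hw, Hl.
    destruct (IH w Hw) as [s [Hs Hsrc]].
    exists (upd s k (u, l)). split.
    + intros j Hj.
      assert (Hsj : src (upd s k (u,l)) j = src s j) by (apply src_upd_le; lia).
      unfold valid, edge_at. rewrite Hsj.
      destruct (Nat.eqb_spec j k) as [E|E].
      * subst j. rewrite upd_eq. simpl. rewrite Hsrc. split; [split; [exact Hu|split; [exact Hl|exact Hw]]|exact Me].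
      * rewrite (upd_neq s k (u,l) j E). destruct (Hs j ltac:(lia)) as [Vv Mm]. exact (conj Vv Mm).
    + simpl. rewrite upd_eq. reflexivity.
Qed.

Lemma chain_unique B om : is_ordering B om -> forall k x z,
  minseg B om x k -> minseg B om z k -> src x k = src z k -> forall j, j < k -> x j = z j.
Proof.
  intros H. induction k as [|k IH]; intros x z Hx Hz Hs j Hj; [lia|].
  destruct (Hx k ltac:(lia)) as [Vx Mx]. destruct (Hz k ltac:(lia)) as [Vz Mz].
  simpl in Hs.
  assert (Ee : edge_at x k = edge_at z k).
  { apply (min_unique B om k (fst (x k))); auto.
    - exact (proj1 Vx).
    - apply valid_in_r; auto.
    - rewrite Hs. apply valid_in_r; auto.
    - rewrite Hs. exact Mz. }
  unfold edge_at in Ee. injection Ee as E1 E2.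
  assert (Exk : x k = z k).
  { destruct (x k) as [a b], (z k) as [c d]. simpl in *. subst. reflexivity. }
  destruct (Nat.eq_dec j k) as [->|Hne]; [exact Exk|].
  apply (IH x z); auto; try lia.
  - intros i Hi. apply Hx. lia.
  - intros i Hi. apply Hz. lia.
Qed.

Definition firstnm B om (x : path) k : Prop :=
  ~ is_max B om k (fst (x k)) (edge_at x k) /\
  forall j, j < k -> is_max B om j (fst (x j)) (edge_at x j).

Lemma firstnm_unique B om x k1 k2 : firstnm B om x k1 -> firstnm B om x k2 -> k1 = k2.
Proof.
  intros [N1 H1] [N2 H2]. destruct (lt_eq_lt_dec k1 k2) as [[L|E]|L]; auto.
  - exfalso; exact (N1 (H2 k1 L)).
  - exfalso; exact (N2 (H1 k2 L)).
Qed.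

Lemma least_exists (Q : nat -> Prop) : (exists i, Q i) -> exists k, Q k /\ forall j, j < k -> ~ Q j.
Proof.
  intros [i Qi]. revert Qi. induction i as [i IH] using lt_wf_ind. intros Qi.
  destruct (classic (exists j, j < i /\ Q j)) as [[j [Hj Qj]]|N].
  - exact (IH j Hj Qj).
  - exists i. split; auto. intros j Hj Qj. apply N; eauto.
Qed.

Lemma firstnm_exists B om x : ~ max_path B om x -> exists k, firstnm B om x k.
Proof.
  intros Hn. unfold max_path in Hn. apply not_all_ex_not in Hn.
  destruct (least_exists _ Hn) as [k [Hk Hl]].
  exists k. split; auto. intros j Hj. apply NNPP. apply Hl; auto.
Qed.

Lemma firstnm_not_max B om x k : firstnm B om x k -> ~ max_path B om x.
Proof. intros [N _] H. exact (N (H k)). Qed.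

Definition vspec B om (x y : path) : Prop :=
  is_path B y /\
  ((max_path B om x /\ min_path B om y) \/
   (exists k, firstnm B om x k /\ (forall j, k < j -> y j = x j) /\ fst (y k) = fst (x k) /\
      is_succ B om k (fst (x k)) (edge_at x k) (edge_at y k) /\
      (forall j, j < k -> is_min B om j (fst (y j)) (edge_at y j)))).

Definition V B om (x : path) : path :=
  epsilon (inhabits (fun _ : nat => (0,0))) (vspec B om x).

Lemma vspec_exists B om x : is_ordering B om ->
  (exists xm, is_path B xm /\ min_path B om xm) -> is_path B x -> exists y, vspec B om x y.
Proof.
  intros H [xm [Pm Mm]] Px.
  destruct (classic (max_path B om x)) as [Mx|Nx].
  - exists xm. split; [exact Pm| left; split; assumption].
  - destruct (firstnm_exists B om x Nx) as [k Fk].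
    pose proof (path_valid B x Px) as Vx.
    destruct (Vx k) as [Hv _].
    destruct (exists_succ B om k (fst (x k)) (edge_at x k) H Hv (valid_in_r B x k (Vx k)) (proj1 Fk)) as [[w l] Hsucc].
    pose proof Hsucc as [[Hw Hl] _]. simpl in Hw, Hl.
    destruct (chain_exists B om H k w Hw) as [s [Hs Hsrc]].
    set (y := fun j => if Nat.ltb j k then s j else if Nat.eqb j k then (fst (x k), l) else x j).
    assert (Ylt : forall j, j < k -> y j = s j).
    { intros j Hj. unfold y. destruct (Nat.ltb_spec j k); [reflexivity|lia]. }
    assert (Yk : y k = (fst (x k), l)).
    { unfold y. destruct (Nat.ltb_spec k k); [lia|]. rewrite Nat.eqb_refl. reflexivity. }
    assert (Ygt : forall j, k < j -> y j = x j).
    { intros j Hj. unfold y. destruct (Nat.ltb_spec j k); [lia|]. destruct (Nat.eqb_spec j k); [lia|reflexivity]. }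
    assert (Sle : forall j, j <= k -> src y j = src s j).
    { intros [|j] Hj; simpl; [reflexivity|]. rewrite Ylt; [reflexivity|lia]. }
    assert (Sgt : forall j, k < j -> src y j = src x j).
    { intros [|j] Hj; [lia|]. simpl. destruct (Nat.eq_dec j k) as [->|Hne].
      - rewrite Yk. reflexivity.
      - rewrite Ygt; [reflexivity|lia]. }
    exists y. split.
    + apply valid_path. intros j. destruct (lt_eq_lt_dec j k) as [[L|E]|L].
      * unfold valid. rewrite Ylt, Sle by lia. exact (proj1 (Hs j L)).
      * subst j. unfold valid. rewrite Yk, Sle, Hsrc by lia. simpl. split; [exact Hv|split; assumption].
      * unfold valid. rewrite Ygt, Sgt by lia. apply (Vx j).
    + right. exists k. split; [exact Fk|]. split; [exact Ygt|]. split; [rewrite Yk; reflexivity|]. split.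
      * assert (Ey : edge_at y k = (w,l)) by (unfold edge_at; rewrite Sle, Hsrc, Yk by lia; reflexivity).
        rewrite Ey. exact Hsucc.
      * intros j Hj. unfold edge_at. rewrite Sle, Ylt by lia. exact (proj2 (Hs j Hj)).
Qed.

Lemma vspec_unique B om x y1 y2 : is_ordering B om ->
  (forall a b, is_path B a -> is_path B b -> min_path B om a -> min_path B om b -> forall j, a j = b j) ->
  is_path B x -> vspec B om x y1 -> vspec B om x y2 -> forall j, y1 j = y2 j.
Proof.
  intros H Hu Px [P1 [[M1 N1]|[k1 [F1 [G1 [E1 [S1 L1]]]]]]] [P2 [[M2 N2]|[k2 [F2 [G2 [E2 [S2 L2]]]]]]].
  - apply Hu; auto.
  - exfalso. exact (firstnm_not_max B om x k2 F2 M1).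
  - exfalso. exact (firstnm_not_max B om x k1 F1 M2).
  - pose proof (firstnm_unique B om x k1 k2 F1 F2) as <-.
    pose proof (path_valid B x Px k1) as Vx.
    assert (Ee : edge_at y1 k1 = edge_at y2 k1)
      by exact (succ_unique B om k1 (fst (x k1)) (edge_at x k1) _ _ H (proj1 Vx) S1 S2).
    unfold edge_at in Ee. injection Ee as Es Es2.
    assert (Ek : y1 k1 = y2 k1).
    { destruct (y1 k1), (y2 k1). simpl in *. congruence. }
    intros j. destruct (lt_eq_lt_dec j k1) as [[L|E]|L].
    + apply (chain_unique B om H k1 y1 y2); auto.
      * intros i Hi. split; [apply path_valid; auto| apply L1; auto].
      * intros i Hi. split; [apply path_valid; auto| apply L2; auto].
    + subst. exact Ek.
    + rewrite G1, G2; auto.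
Qed.

Definition HMall B om M (c : nat -> nat) : Prop :=
  (forall j, M <= j -> c j < nv B j) /\
  (forall j v e, M <= j -> v < nv B (S j) -> in_r B j v e -> is_min B om j v e -> fst e = c j).

Definition HMv B om M (c : nat -> nat) : Prop :=
  (forall j, M <= j -> c j < nv B j) /\
  (forall j e, M <= j -> in_r B j (c (S j)) e -> is_min B om j (c (S j)) e -> fst e = c j).

Lemma HMall_HMv B om M c : HMall B om M c -> HMv B om M c.
Proof. intros [H1 H2]. split; [exact H1|]. intros j e Hj He Hm. apply (H2 j (c (S j)) e); auto. Qed.

Lemma minpath_unique B om M c : is_ordering B om -> HMall B om M c ->
  forall a b, is_path B a -> is_path B b -> min_path B om a -> min_path B om b -> forall j, a j = b j.
Proof.
  intros H [_ Hc] a b Pa Pb Ma Mb j.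
  set (K := j + M + 1).
  pose proof (path_valid B a Pa K) as Va. pose proof (path_valid B b Pb K) as Vb.
  assert (A1 : src a K = c K) by exact (Hc K _ _ ltac:(lia) (proj1 Va) (valid_in_r B a K Va) (Ma K)).
  assert (A2 : src b K = c K) by exact (Hc K _ _ ltac:(lia) (proj1 Vb) (valid_in_r B b K Vb) (Mb K)).
  apply (chain_unique B om H K a b).
  - intros i Hi. split; [apply path_valid; auto| apply Ma].
  - intros i Hi. split; [apply path_valid; auto| apply Mb].
  - congruence.
  - lia.
Qed.

Definition mine B om n v : nat * nat :=
  epsilon (inhabits (0,0)) (fun e => in_r B n v e /\ is_min B om n v e).

Lemma mine_spec B om n v : is_ordering B om -> v < nv B (S n) ->
  in_r B n v (mine B om n v) /\ is_min B om n v (mine B om n v).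
Proof. intros H Hv. unfold mine. apply epsilon_spec. apply exists_min; auto. Qed.

Lemma tailpath_exists B om M c : is_ordering B om -> HMv B om M c ->
  exists x, is_path B x /\ min_path B om x /\ forall j, M <= j -> fst (x j) = c (S j).
Proof.
  intros H [Hc Hs].
  destruct (chain_exists B om H M (c M) (Hc M (le_n M))) as [s [Hss Hsrc]].
  set (x := fun j => if Nat.ltb j M then s j else (c (S j), snd (mine B om j (c (S j))))).
  assert (Xlt : forall j, j < M -> x j = s j).
  { intros j Hj. unfold x. destruct (Nat.ltb_spec j M); [reflexivity|lia]. }
  assert (Xge : forall j, M <= j -> x j = (c (S j), snd (mine B om j (c (S j))))).
  { intros j Hj. unfold x. destruct (Nat.ltb_spec j M); [lia|reflexivity]. }
  assert (Sle : forall j, j <= M -> src x j = src s j).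
  { intros [|j] Hj; simpl; [reflexivity|]. rewrite Xlt; [reflexivity|lia]. }
  assert (Sge : forall j, M <= j -> src x j = c j).
  { intros j Hj. destruct (Nat.eq_dec j M) as [->|Hne].
    - rewrite Sle; [exact Hsrc| lia].
    - destruct j as [|j]; [lia|]. simpl. rewrite Xge; [reflexivity|lia]. }
  assert (Mine : forall j, M <= j -> in_r B j (c (S j)) (mine B om j (c (S j))) /\
             is_min B om j (c (S j)) (mine B om j (c (S j))) /\ fst (mine B om j (c (S j))) = c j).
  { intros j Hj. destruct (mine_spec B om j (c (S j)) H (Hc (S j) ltac:(lia))) as [I Mi].
    split; [exact I| split; [exact Mi|]]. apply Hs; auto. }
  assert (Ege : forall j, M <= j -> edge_at x j = mine B om j (c (S j))).
  { intros j Hj. unfold edge_at. rewrite Sge, Xge by lia. cbn [fst snd].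
    destruct (Mine j Hj) as [_ [_ F]]. rewrite <- F. destruct (mine B om j (c (S j))); reflexivity. }
  assert (Vx : forall j, valid B x j /\ is_min B om j (fst (x j)) (edge_at x j)).
  { intros j. destruct (Nat.lt_ge_cases j M) as [L|L].
    - unfold valid, edge_at. rewrite Sle, Xlt by lia. exact (Hss j L).
    - destruct (Mine j L) as [[I1 I2] [Mi F]]. rewrite Ege by lia.
      unfold valid. rewrite Sge, Xge by lia. cbn [fst snd].
      split; [split; [apply Hc; lia| split; [rewrite <- F; exact I2| apply Hc; lia]] | exact Mi]. }
  exists x. split; [apply valid_path; intros j; exact (proj1 (Vx j))|].
  split; [intros i; exact (proj2 (Vx i))|].
  intros j Hj. rewrite Xge by lia. reflexivity.
Qed.

Lemma V_spec B om M c x : is_ordering B om -> HMall B om M c -> is_path B x -> vspec B om x (V B om x).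
Proof.
  intros H HM Px. unfold V. apply epsilon_spec. apply vspec_exists; auto.
  destruct (tailpath_exists B om M c H (HMall_HMv B om M c HM)) as [xm [P [Mn _]]]. eauto.
Qed.

Lemma edge_eq (a b : path) k : edge_at a k = edge_at b k -> src a k = src b k /\ snd (a k) = snd (b k).
Proof. unfold edge_at. intros E. injection E as E1 E2. auto. Qed.

Lemma pair_eq (a b : nat * nat) : fst a = fst b -> snd a = snd b -> a = b.
Proof. destruct a, b; simpl; congruence. Qed.

Lemma V_inv B om M c M' c' x : is_ordering B om -> HMall B om M c -> HMall B (opo om) M' c' ->
  is_path B x -> forall j, V B (opo om) (V B om x) j = x j.
Proof.
  intros H HM HM' Px.
  pose proof (V_spec B om M c x H HM Px) as Sy.
  set (y := V B om x) in *.
  pose proof (op_ordering B om H) as H'.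
  destruct Sy as [Py Cy].
  pose proof (V_spec B (opo om) M' c' y H' HM' Py) as Sz.
  set (z := V B (opo om) y) in *.
  destruct Sz as [Pz Cz].
  destruct Cy as [[Mx Ny]|[k [Fk [Gk [Ek [Sk Lk]]]]]].
  - destruct Cz as [[My Nz]|[k [Fk _]]].
    + exact (minpath_unique B (opo om) M' c' H' HM' z x Pz Px Nz Mx).
    + exfalso. exact (firstnm_not_max B (opo om) y k Fk Ny).
  - pose proof (path_valid B x Px k) as Vxk.
    assert (Fy : firstnm B (opo om) y k).
    { split.
      - rewrite Ek. exact (succ_not_min B om k (fst (x k)) (edge_at x k) (edge_at y k) (valid_in_r B x k Vxk) Sk).
      - intros j Hj. exact (Lk j Hj). }
    destruct Cz as [[My _]|[k' [Fk' [Gk' [Ek' [Sk' Lk']]]]]].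
    + exfalso. exact (firstnm_not_max B (opo om) y k Fy My).
    + pose proof (firstnm_unique B (opo om) y k' k Fk' Fy) as ->.
      rewrite Ek in Sk'.
      pose proof (succ_op B om k (fst (x k)) (edge_at x k) (edge_at y k) (valid_in_r B x k Vxk) Sk) as Sx.
      assert (Ee : edge_at z k = edge_at x k)
        by exact (succ_unique B (opo om) k (fst (x k)) (edge_at y k) _ _ H' (proj1 Vxk) Sk' Sx).
      destruct (edge_eq z x k Ee) as [Es Esn].
      intros j. destruct (lt_eq_lt_dec j k) as [[L|E]|L].
      * apply (chain_unique B (opo om) H' k z x); auto.
        -- intros i Hi. split; [apply path_valid; auto| apply Lk'; auto].
        -- intros i Hi. split; [apply path_valid; auto| apply (proj2 Fk); auto].
      * subst j. apply pair_eq; [congruence|exact Esn].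
      * rewrite Gk', Gk; auto.
Qed.

Lemma V_cont B om M c : is_ordering B om -> HMall B om M c -> continuous_on B (V B om).
Proof.
  intros H HM x Px n.
  pose proof (V_spec B om M c x H HM Px) as [Pvx Cx].
  destruct Cx as [[Mx Nx]|[k [Fk [Gk [Ek [Sk Lk]]]]]].
  - exists (n + M + 1). intros y Py Ag.
    pose proof (V_spec B om M c y H HM Py) as [Pvy Cy].
    destruct Cy as [[My Ny]|[k [Fk [Gk [Ek [Sk Lk]]]]]].
    + intros i Hi. apply (minpath_unique B om M c H HM); auto.
    + assert (Kge : n + M + 1 <= k).
      { destruct (Nat.lt_ge_cases k (n + M + 1)) as [L|L]; [|exact L].
        exfalso. apply (proj1 Fk).
        assert (E1 : y k = x k) by (symmetry; apply Ag; exact L).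
        assert (E2 : src y k = src x k).
        { destruct k as [|k']; [reflexivity|]. simpl. rewrite (Ag k'); [reflexivity|lia]. }
        unfold edge_at. rewrite E1, E2. exact (Mx k). }
      set (K := n + M).
      pose proof (path_valid B (V B om y) Pvy K) as VyK.
      pose proof (path_valid B (V B om x) Pvx K) as VxK.
      destruct HM as [Hc1 Hc2].
      assert (S1 : src (V B om y) K = c K)
        by exact (Hc2 K _ _ ltac:(lia) (proj1 VyK) (valid_in_r _ _ _ VyK) (Lk K ltac:(lia))).
      assert (S2 : src (V B om x) K = c K)
        by exact (Hc2 K _ _ ltac:(lia) (proj1 VxK) (valid_in_r _ _ _ VxK) (Nx K)).
      intros i Hi. apply (chain_unique B om H K); [| | congruence | lia].
      * intros j Hj. split; [apply path_valid; auto| apply Nx].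
      * intros j Hj. split; [apply path_valid; auto| apply Lk; lia].
  - exists (n + k + 1). intros y Py Ag.
    assert (Agj : forall j, j <= k -> y j = x j /\ src y j = src x j).
    { intros j Hj. split; [symmetry; apply Ag; lia|].
      destruct j as [|j]; [reflexivity|]. simpl. rewrite (Ag j); [reflexivity|lia]. }
    assert (Edg : forall j, j <= k -> fst (y j) = fst (x j) /\ edge_at y j = edge_at x j).
    { intros j Hj. destruct (Agj j Hj) as [A1 A2]. unfold edge_at. rewrite A1, A2. auto. }
    assert (Fy : firstnm B om y k).
    { destruct Fk as [Nk Hk]. split.
      - destruct (Edg k (le_n k)) as [A1 A2]. rewrite A1, A2. exact Nk.
      - intros j Hj. destruct (Edg j ltac:(lia)) as [A1 A2]. rewrite A1, A2. apply Hk; auto. }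
    pose proof (V_spec B om M c y H HM Py) as [Pvy Cy].
    destruct Cy as [[My _]|[k' [Fk' [Gk' [Ek' [Sk' Lk']]]]]].
    + exfalso. exact (firstnm_not_max B om y k Fy My).
    + pose proof (firstnm_unique B om y k' k Fk' Fy) as ->.
      destruct (Edg k (le_n k)) as [A1 A2].
      rewrite A1, A2 in Sk'. rewrite A1 in Ek'.
      pose proof (path_valid B x Px k) as Vxk.
      assert (Ee : edge_at (V B om x) k = edge_at (V B om y) k)
        by exact (succ_unique B om k (fst (x k)) (edge_at x k) _ _ H (proj1 Vxk) Sk Sk').
      destruct (edge_eq _ _ k Ee) as [Es Esn].
      intros j Hj. destruct (lt_eq_lt_dec j k) as [[L|E]|L].
      * apply (chain_unique B om H k); auto.
        -- intros i Hi. split; [apply path_valid; auto| apply Lk; auto].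
        -- intros i Hi. split; [apply path_valid; auto| apply Lk'; auto].
      * subst j. apply pair_eq; [congruence|exact Esn].
      * rewrite Gk, Gk' by lia. apply Ag. lia.
Qed.

Lemma perfect_of B om M c M' c' : is_ordering B om -> HMall B om M c -> HMall B (opo om) M' c' ->
  perfect B om.
Proof.
  intros H HM HM'.
  pose proof (op_ordering B om H) as H'.
  exists (V B om). split; [|split; [|split]].
  - split; [intros x Px; exact (proj1 (V_spec B om M c x H HM Px))|].
    split; [exact (V_cont B om M c H HM)|].
    exists (V B (opo om)). split; [intros x Px; exact (proj1 (V_spec B (opo om) M' c' x H' HM' Px))|].
    split; [exact (V_cont B (opo om) M' c' H' HM')|].
    split.
    + intros x Px i. exact (V_inv B om M c M' c' x H HM HM' Px i).
    + intros x Px i. exact (V_inv B (opo om) M' c' M c x H' HM' HM Px i).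
  - intros x Px Mx. destruct (V_spec B om M c x H HM Px) as [_ [[_ N]|[k [Fk _]]]];
      [exact N| exfalso; exact (firstnm_not_max _ _ _ _ Fk Mx)].
  - intros y Py My. exists (V B (opo om) y).
    destruct (V_spec B (opo om) M' c' y H' HM' Py) as [Pz Cz].
    split; [exact Pz|split].
    + destruct Cz as [[_ N]|[k [Fk _]]]; [exact N| exfalso; exact (firstnm_not_max _ _ _ _ Fk My)].
    + intros i. exact (V_inv B (opo om) M' c' M c y H' HM' HM Py i).
  - intros x Px k Nk Hk.
    destruct (V_spec B om M c x H HM Px) as [_ [[Mx _]|[k' [Fk' R]]]].
    + exfalso. exact (Nk (Mx k)).
    + pose proof (firstnm_unique B om x k' k Fk' (conj Nk Hk)) as ->. exact R.
Qed.

Definition lexk (f : nat -> nat) (a b : nat * nat) : Prop :=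
  f (fst a) < f (fst b) \/ (f (fst a) = f (fst b) /\ snd a < snd b).

Lemma lexk_linear B n v f : (forall w1 w2, w1 < nv B n -> w2 < nv B n -> f w1 = f w2 -> w1 = w2) ->
  strict_linear (in_r B n v) (lexk f).
Proof.
  intros Hf. unfold lexk. split; [|split].
  - intros a _ [H|[_ H]]; lia.
  - intros a b c _ _ _ [H1|[H1 H2]] [H3|[H3 H4]]; lia.
  - intros [a1 a2] [b1 b2] [Ha _] [Hb _]. simpl in *.
    destruct (lt_eq_lt_dec (f a1) (f b1)) as [[L|E]|L]; [right;left;left;exact L| |right;right;left;exact L].
    pose proof (Hf a1 b1 Ha Hb E) as ->.
    destruct (lt_eq_lt_dec a2 b2) as [[L|E']|L]; [right;left;right;split;auto| left; subst; reflexivity| right;right;right;split;auto].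
Qed.

Definition kw (B : Bratteli) (n w : nat) : nat := if Nat.eqb w 0 then nv B n else w.
Lemma kw_inj B n : forall w1 w2, w1 < nv B n -> w2 < nv B n -> kw B n w1 = kw B n w2 -> w1 = w2.
Proof. intros w1 w2 H1 H2. unfold kw. destruct (Nat.eqb_spec w1 0), (Nat.eqb_spec w2 0); lia. Qed.

Lemma sl_ext D (R R' : nat*nat -> nat*nat -> Prop) : (forall a b, R a b <-> R' a b) ->
  strict_linear D R -> strict_linear D R'.
Proof.
  intros E [H1 [H2 H3]]. split; [|split].
  - intros a Ha. rewrite <- E. auto.
  - intros a b c Ha Hb Hc. rewrite <- !E. eauto.
  - intros a b Ha Hb. rewrite <- !E. auto.
Qed.

Definition omP (om : order_data) B M : order_data :=
  fun n v a b => if Nat.ltb n M then om n v a b else lexk (kw B n) a b.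
Definition omN (om : order_data) B M : order_data :=
  fun n v a b => if Nat.ltb n M then om n v a b else
     if Nat.eqb v 1 then lexk (fun w => w) a b else lexk (kw B n) a b.

Lemma eventually_ge2 B d : has_rank B d -> 2 <= d -> exists N, forall n, N <= n -> 2 <= nv B n.
Proof.
  intros [_ [_ H]] Hd.
  assert (A : forall d', d' < d -> exists N, forall n, N <= n -> nv B n <> d').
  { intros d' Hd'. pose proof (H d' Hd') as Hn. unfold infinitely_often in Hn.
    apply not_all_ex_not in Hn. destruct Hn as [N HN]. exists N. intros n Hn E. apply HN. eauto. }
  destruct (A 0 ltac:(lia)) as [N0 H0]. destruct (A 1 ltac:(lia)) as [N1 H1].
  exists (N0 + N1). intros n Hn. pose proof (H0 n ltac:(lia)). pose proof (H1 n ltac:(lia)). lia.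
Qed.

Fixpoint maxL (L : list (nat*nat)) : nat :=
  match L with [] => 0 | p :: L' => Nat.max (fst p) (maxL L') end.
Lemma maxL_in L n v : In (n,v) L -> n <= maxL L.
Proof.
  induction L as [|p L IH]; simpl; [tauto|]. intros [E|I]; [subst; simpl; lia| specialize (IH I); lia].
Qed.

Lemma kw_min B j v e : 2 <= nv B j -> (0 < inc B j v 1) -> in_r B j v e ->
  (forall e', in_r B j v e' -> ~ lexk (kw B j) e' e) -> fst e = 1.
Proof.
  intros H2 Hi [Hw Hl] Hm. destruct e as [w l]. simpl in *.
  destruct (Nat.eq_dec w 1) as [->|Hne]; [reflexivity|exfalso].
  apply (Hm (1,0)).
  - unfold in_r; simpl. lia.
  - unfold lexk, kw; simpl. destruct (Nat.eqb_spec w 0); left; lia.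
Qed.

Lemma kw_max B j v e : 2 <= nv B j -> (0 < inc B j v 0) -> in_r B j v e ->
  (forall e', in_r B j v e' -> ~ lexk (kw B j) e e') -> fst e = 0.
Proof.
  intros H2 Hi [Hw Hl] Hm. destruct e as [w l]. simpl in *.
  destruct (Nat.eq_dec w 0) as [->|Hne]; [reflexivity|exfalso].
  apply (Hm (0,0)).
  - unfold in_r; simpl. lia.
  - unfold lexk, kw; simpl. destruct (Nat.eqb_spec w 0); [lia|]. left; lia.
Qed.

Lemma dense_perfect B d : has_rank B d -> 2 <= d -> positive_incidence B -> dense_in_orderings B (perfect B).
Proof.
  intros Hr Hd Hpos om Hom L.
  destruct (eventually_ge2 B d Hr Hd) as [N HN].
  set (M := N + S (maxL L)).
  set (om' := omP om B M).
  assert (Eq : forall j v a b, M <= j -> (om' j v a b <-> lexk (kw B j) a b)).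
  { intros j v a b Hj. unfold om', omP. rewrite (proj2 (Nat.ltb_ge j M) Hj). tauto. }
  assert (Hord : is_ordering B om').
  { intros n v Hv. destruct (Nat.lt_ge_cases n M) as [Lt|Ge].
    - apply (sl_ext _ (om n v)); [|exact (Hom n v Hv)].
      intros a b. unfold om', omP. rewrite (proj2 (Nat.ltb_lt n M) Lt). tauto.
    - apply (sl_ext _ (lexk (kw B n))); [|apply lexk_linear, kw_inj].
      intros a b. rewrite (Eq n v a b Ge). tauto. }
  exists om'. split; [exact Hord|split].
  - apply (perfect_of B om' M (fun _ => 1) M (fun _ => 0) Hord).
    + split; [intros j Hj; pose proof (HN j ltac:(lia)); lia|].
      intros j v e Hj Hv He Hm. pose proof (HN j ltac:(lia)) as H0.
      apply (kw_min B j v e H0 (Hpos j v 1 Hv ltac:(lia)) He).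
      intros e' He' R. apply (Hm e' He'). apply Eq; auto.
    + split; [intros j Hj; pose proof (HN j ltac:(lia)); lia|].
      intros j v e Hj Hv He Hm. pose proof (HN j ltac:(lia)) as H0.
      apply (kw_max B j v e H0 (Hpos j v 0 Hv ltac:(lia)) He).
      intros e' He' R. apply (Hm e' He'). apply Eq; auto.
  - intros n v Hin Hv a b Ha Hb. unfold om', omP.
    pose proof (maxL_in L n v Hin). rewrite (proj2 (Nat.ltb_lt n M) ltac:(lia)). tauto.
Qed.

Lemma nonperfect B om M : positive_incidence B ->
  (forall n, M <= n -> 2 <= nv B n) -> is_ordering B (omN om B M) -> ~ perfect B (omN om B M).
Proof.
  intros Hpos HN Hord [phi [[Hpath [Hcont _]] [_ [_ Hcl]]]].
  set (om2 := omN om B M) in *.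
  assert (Eq2 : forall j v a b, M <= j -> (om2 j v a b <->
      if Nat.eqb v 1 then lexk (fun w => w) a b else lexk (kw B j) a b)).
  { intros j v a b Hj. unfold om2, omN. rewrite (proj2 (Nat.ltb_ge j M) Hj). tauto. }
  assert (Max0 : forall j e, M <= j -> in_r B j 0 e -> is_max B om2 j 0 e -> fst e = 0).
  { intros j e Hj He Hm. pose proof (HN j Hj). pose proof (HN (S j) ltac:(lia)).
    apply (kw_max B j 0 e H (Hpos j 0 0 ltac:(lia) ltac:(lia)) He).
    intros e' He' R. apply (Hm e' He'). apply Eq2; auto. }
  assert (Min0 : forall j e, M <= j -> in_r B j 0 e -> is_min B om2 j 0 e -> fst e = 1).
  { intros j e Hj He Hm. pose proof (HN j Hj). pose proof (HN (S j) ltac:(lia)).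
    apply (kw_min B j 0 e H (Hpos j 0 1 ltac:(lia) ltac:(lia)) He).
    intros e' He' R. apply (Hm e' He'). apply Eq2; auto. }
  assert (Min1 : forall j e, M <= j -> in_r B j 1 e -> is_min B om2 j 1 e -> fst e = 0).
  { intros j [w l] Hj [Hw Hl] Hm. pose proof (HN j Hj). pose proof (HN (S j) ltac:(lia)).
    simpl in *. destruct (Nat.eq_dec w 0) as [->|Hne]; [reflexivity|exfalso].
    apply (Hm (0,0)).
    - unfold in_r; simpl. split; [lia|]. apply (Hpos j 1 0); lia.
    - apply Eq2; [exact Hj|]. simpl. unfold lexk; simpl. left; lia. }
  destruct (tailpath_exists B (opo om2) M (fun _ => 0) (op_ordering B om2 Hord)) as [X0 [PX0 [MX0 TX0]]].
  { split; [intros j Hj; pose proof (HN j Hj); lia|]. intros j e Hj He Hm. exact (Max0 j e Hj He Hm). }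
  assert (SX0 : forall j, S M <= j -> src X0 j = 0).
  { intros [|j] Hj; [lia|]. simpl. exact (TX0 j ltac:(lia)). }
  destruct (Hcont X0 PX0 (S M)) as [m Hm].
  assert (Key : forall k, M + 2 <= k -> m <= k ->
     fst (phi X0 M) = if Nat.even (k - 1 - M) then 1 else 0).
  { intros k Hk1 Hk2.
    set (y := fun j => if Nat.ltb j k then X0 j else if Nat.eqb j k then (1, inc B k 1 0 - 1) else (1, 0)).
    assert (Ylt : forall j, j < k -> y j = X0 j).
    { intros j Hj. unfold y. destruct (Nat.ltb_spec j k); [reflexivity|lia]. }
    assert (Yk : y k = (1, inc B k 1 0 - 1)).
    { unfold y. destruct (Nat.ltb_spec k k); [lia|]. rewrite Nat.eqb_refl. reflexivity. }
    assert (Ygt : forall j, k < j -> y j = (1, 0)).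
    { intros j Hj. unfold y. destruct (Nat.ltb_spec j k); [lia|]. destruct (Nat.eqb_spec j k); [lia|reflexivity]. }
    assert (Sle : forall j, j <= k -> src y j = src X0 j).
    { intros [|j] Hj; simpl; [reflexivity|]. rewrite Ylt; [reflexivity|lia]. }
    assert (Sgt : forall j, k < j -> src y j = 1).
    { intros [|j] Hj; [lia|]. simpl. destruct (Nat.eq_dec j k) as [->|Hne].
      - rewrite Yk. reflexivity.
      - rewrite Ygt; [reflexivity|lia]. }
    assert (Py : is_path B y).
    { apply valid_path. intros j. destruct (lt_eq_lt_dec j k) as [[L|E]|L].
      - unfold valid. rewrite Ylt, Sle by lia. exact (path_valid B X0 PX0 j).
      - subst j. unfold valid. rewrite Yk, Sle, SX0 by lia. simpl.
        pose proof (HN k ltac:(lia)). pose proof (HN (S k) ltac:(lia)).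
        pose proof (Hpos k 1 0 ltac:(lia) ltac:(lia)). lia.
      - unfold valid. rewrite Ygt, Sgt by lia. simpl.
        pose proof (HN j ltac:(lia)). pose proof (HN (S j) ltac:(lia)).
        pose proof (Hpos j 1 1 ltac:(lia) ltac:(lia)). lia. }
    assert (Ag : agree_upto X0 y m).
    { intros i Hi. rewrite Ylt by lia. reflexivity. }
    assert (FYk : fst (y k) = 1) by (rewrite Yk; reflexivity).
    assert (EYk : edge_at y k = (0, inc B k 1 0 - 1)).
    { unfold edge_at. rewrite Sle, SX0, Yk by lia. reflexivity. }
    assert (Nk : ~ is_max B om2 k (fst (y k)) (edge_at y k)).
    { rewrite FYk, EYk. intro Hmx. apply (Hmx (1,0)).
      - unfold in_r; simpl. pose proof (HN k ltac:(lia)). pose proof (HN (S k) ltac:(lia)).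
        split; [lia|]. apply (Hpos k 1 1); lia.
      - apply Eq2; [lia|]. simpl. unfold lexk; simpl. left; lia. }
    assert (Hb : forall j, j < k -> is_max B om2 j (fst (y j)) (edge_at y j)).
    { intros j Hj. unfold edge_at. rewrite Sle, Ylt by lia. exact (MX0 j). }
    destruct (Hcl y Py k Nk Hb) as [_ [_ [Sc Lk]]].
    set (z := phi y) in *.
    rewrite FYk, EYk in Sc.
    assert (Hs : is_succ B om2 k 1 (0, inc B k 1 0 - 1) (1, 0)).
    { pose proof (HN k ltac:(lia)). pose proof (HN (S k) ltac:(lia)).
      pose proof (Hpos k 1 0 ltac:(lia) ltac:(lia)).
      split; [|split].
      - unfold in_r; simpl. split; [lia|]. apply (Hpos k 1 1); lia.
      - apply Eq2; [lia|]. simpl. unfold lexk; simpl. left; lia.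
      - intros [w l] [Hw Hl] R1 R2. simpl in Hw, Hl.
        apply Eq2 in R1; [|lia]. apply Eq2 in R2; [|lia]. simpl in R1, R2.
        unfold lexk in R1, R2. simpl in R1, R2. destruct w; lia. }
    assert (Ez : edge_at z k = (1,0))
      by exact (succ_unique B om2 k 1 _ _ _ Hord ltac:(pose proof (HN (S k) ltac:(lia)); lia) Sc Hs).
    assert (Top : fst (z (k-1)) = 1).
    { assert (T : src z k = 1) by (change (src z k) with (fst (edge_at z k)); rewrite Ez; reflexivity).
      replace k with (S (k-1)) in T by lia. exact T. }
    assert (Par : forall t, t + M + 1 <= k -> fst (z (k - 1 - t)) = if Nat.even t then 1 else 0).
    { induction t as [|t IH]; intros Ht.
      - rewrite Nat.sub_0_r. exact Top.
      - pose proof (IH ltac:(lia)) as IH'.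
        assert (Hj : k - 1 - t = S (k - 1 - S t)) by lia.
        pose proof (path_valid B z (Hpath y Py) (k - 1 - t)) as Vz.
        pose proof (Lk (k - 1 - t) ltac:(lia)) as Mz.
        pose proof (valid_in_r B z _ Vz) as Iz.
        assert (Sz : src z (k - 1 - t) = fst (z (k - 1 - S t))) by (rewrite Hj; reflexivity).
        rewrite Nat.even_succ. unfold Nat.odd.
        destruct (Nat.even t) eqn:Et; simpl in IH' |- *.
        + rewrite <- Sz. rewrite IH' in Mz, Iz.
          exact (Min1 (k - 1 - t) _ ltac:(lia) Iz Mz).
        + rewrite <- Sz. rewrite IH' in Mz, Iz.
          exact (Min0 (k - 1 - t) _ ltac:(lia) Iz Mz). }
    pose proof (Par (k - 1 - M) ltac:(lia)) as P.
    replace (k - 1 - (k - 1 - M)) with M in P by lia.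
    rewrite <- P. f_equal. exact (Hm y Py Ag M (Nat.lt_succ_diag_r M)). }
  pose proof (Key (m + M + 2) ltac:(lia) ltac:(lia)) as K1.
  pose proof (Key (m + M + 3) ltac:(lia) ltac:(lia)) as K2.
  replace (m + M + 2 - 1 - M) with (S m) in K1 by lia.
  replace (m + M + 3 - 1 - M) with (S (S m)) in K2 by lia.
  rewrite K1 in K2. rewrite Nat.even_succ in K2. rewrite Nat.even_succ, Nat.odd_succ in K2.
  unfold Nat.odd in K2. destruct (Nat.even m); simpl in K2; discriminate.
Qed.

Theorem mainTheorem2 (B : Bratteli) (d : nat) :
  simple B -> has_rank B d -> 2 <= d -> positive_incidence B ->
  dense_in_orderings B (perfect B) /\
  dense_in_orderings B (fun om => ~ perfect B om).
Proof.
  intros _ Hr Hd Hpos. split.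
  - exact (dense_perfect B d Hr Hd Hpos).
  - intros om Hom L. destruct (eventually_ge2 B d Hr Hd) as [N HN].
    set (M := N + S (maxL L)).
    assert (Hord : is_ordering B (omN om B M)).
    { intros n v Hv. destruct (Nat.lt_ge_cases n M) as [Lt|Ge].
      - apply (sl_ext _ (om n v)); [|exact (Hom n v Hv)].
        intros a b. unfold omN. rewrite (proj2 (Nat.ltb_lt n M) Lt). tauto.
      - destruct (Nat.eqb_spec v 1) as [E|E].
        + apply (sl_ext _ (lexk (fun w => w))); [|apply lexk_linear; auto].
          intros a b. unfold omN. rewrite (proj2 (Nat.ltb_ge n M) Ge). subst v. simpl. tauto.
        + apply (sl_ext _ (lexk (kw B n))); [|apply lexk_linear, kw_inj].
          intros a b. unfold omN. rewrite (proj2 (Nat.ltb_ge n M) Ge).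
          rewrite (proj2 (Nat.eqb_neq v 1) E). tauto. }
    exists (omN om B M). split; [exact Hord|split].
    + apply nonperfect; auto. intros n Hn; apply HN; lia.
    + intros n v Hin Hv a b Ha Hb. unfold omN.
      pose proof (maxL_in L n v Hin). rewrite (proj2 (Nat.ltb_lt n M) ltac:(lia)). tauto.
Qed.
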